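(* Let $0 \leq r < 1$. Define $\delta_k \in \{0,1\}$ for $k \geq 1$ inductively by $\delta_k = 1$ if $\frac{\sum_{i=1}^{k-1} 2i\delta_i + 2k}{k(k+1)} \leq r$, and $\delta_k = 0$ otherwise. For $k \geq 1$ let $w^{\langle k \rangle}$ be the word consisting of $2k$ copies of the letter $1 - \delta_k$, and let $w = w^{\langle 1 \rangle} w^{\langle 2 \rangle} w^{\langle 3 \rangle} \cdots$ (infinite concatenation). Then $\lim_{n \to \infty} |Z(w^{(n)})|/n = r$.
   Context: $w^{(n)}$ denotes the initial subword of length $n$ of $w$, and $Z(u)$ is the set of indices $i$ with $u_i = 0$. *)

(* Defs.v *)
From mathcomp Require Import all_boot all_order all_algebra.
From mathcomp Require Import all_classical all_reals all_analysis.
Set Implicit Arguments. Unset Strict Implicit. Unset Printing Implicit Defensive.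
Import Order.TTheory GRing.Theory Num.Theory.
Local Open Scope ring_scope.

Section Defs.
Variable R : realType.
Variable r : R.

(* The defining test for delta_k, given s = \sum_{i=1}^{k-1} 2 i delta_i. *)
Definition delta_test (s k : nat) : bool :=
  ((s + 2 * k)%:R / (k * k.+1)%:R <= r).

Fixpoint psum (k : nat) : nat :=
  match k with
  | 0 => 0
  | k'.+1 => (psum k' + (if delta_test (psum k') k'.+1 then 2 * k'.+1 else 0))%N
  end.

(* delta_k for k >= 1 (as a boolean: true = 1, false = 0). *)
Definition delta (k : nat) : bool := delta_test (psum k.-1) k.

Lemma psum_sum k : psum k = (\sum_(1 <= i < k.+1) 2 * i * delta i)%N.
Proof.
elim: k => [|k IH]; first by rewrite big_geq.
rewrite big_nat_recr //= -IH /delta /=.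
by case: (delta_test _ _); rewrite ?muln1 ?muln0.
Qed.

Lemma delta_spec k : (1 <= k)%N ->
  delta k = ((\sum_(1 <= i < k) 2 * i * delta i + 2 * k)%N%:R
               / (k * (k + 1))%N%:R <= r).
Proof.
case: k => // k _; rewrite /delta /delta_test /= psum_sum addn1 //.
Qed.

Definition wblock (k : nat) : seq nat := nseq (2 * k) (1 - delta k)%N.

Definition wcat (K : nat) : seq nat := flatten [seq wblock k | k <- iota 1 K].

(* The length-n prefix w^(n) of the infinite word w = w^<1> w^<2> ...;
   wcat n has length n(n+1) >= n, so this is a genuine prefix of w. *)
Definition wprefix (n : nat) : seq nat := take n (wcat n).

Definition Zcard (u : seq nat) : nat := count (fun a => a == 0%N) u.

End Defs.

(* Main.v *)
Require Import Defs.
From mathcomp Require Import all_boot all_order all_algebra.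
From mathcomp Require Import all_classical all_reals all_analysis.
From mathcomp Require Import ring lra zify.
Import Order.TTheory GRing.Theory Num.Theory.
Import numFieldNormedType.Exports.
Local Open Scope ring_scope.
Local Open Scope classical_set_scope.

Section S.
Variables (R : realType) (r : R) (hr0 : 0 <= r) (hr1 : r < 1).

Lemma dtP s k : (0 < k)%N ->
  delta_test r s k = ((s + 2 * k)%:R <= r * (k * k.+1)%:R).
Proof.
move=> k0; rewrite /delta_test ler_pdivrMr //.
by rewrite ltr0n muln_gt0 k0.
Qed.

Lemma natS2 k : (k.+1%:R = k%:R + 1 :> R) /\ (k.+2%:R = k%:R + 2 :> R).
Proof. by split; [rewrite -[k.+1]addn1 natrD | rewrite -[k.+2]addn2 natrD]. Qed.

Lemma aux1 (p K : R) :
 p + 2 * (K + 1) <= r * ((K + 1) * (K + 2)) ->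
 r * (K * (K + 1)) - (K + (K + 0)) <= p -> r * K <= K -> 0 <= r*K -> 0 <= K ->
 p + 2 * (K + 1) <= r * ((K + 1) * (K + 2)) /\
 r * ((K + 1) * (K + 2)) - 2 * (K + 1) <= p + 2 * (K + 1).
Proof. move: hr0 hr1 => *; split; lra. Qed.

Lemma aux2 (p K : R) :
 r * ((K + 1) * (K + 2)) < p + 2 * (K + 1) ->
 p <= r * (K * (K + 1)) -> r * K <= K -> 0 <= r*K -> 0 <= K ->
 p <= r * ((K + 1) * (K + 2)) /\
 r * ((K + 1) * (K + 2)) - 2 * (K + 1) <= p.
Proof. move: hr0 hr1 => *; split; lra. Qed.

Lemma psum_bounds k :
  (psum r k)%:R <= r * (k * k.+1)%:R /\
  r * (k * k.+1)%:R - (2 * k)%:R <= (psum r k)%:R.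
Proof.
elim: k => [|k [IH1 IH2]]; first by rewrite /= mul0n mulr0 subrr.
have [e1 e2] := natS2 k.
have K0 : 0 <= k%:R :> R by [].
have rK : r * k%:R <= k%:R by apply: ler_piMl => //; apply: ltW.
have rK0 : 0 <= r * k%:R by rewrite mulr_ge0.
rewrite /=; case: (boolP (delta_test r (psum r k) k.+1)).
  rewrite dtP // => H; move: H IH1 IH2.
  rewrite ?natrD ?natrM ?natrD e1 e2 /= => H1 H2 H3.
  by apply: aux1.
rewrite dtP // -ltNge => H; move: H IH1 IH2.
rewrite addn0 ?natrD ?natrM ?natrD e1 e2 /= => H1 H2 H3.
by apply: aux2.
Qed.

Lemma wcatS K : wcat r K.+1 = wcat r K ++ wblock r K.+1.
Proof. rewrite /wcat -[K.+1]addn1 iotaD map_cat flatten_cat; congr (_ ++ _).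
by rewrite add1n addn1; exact: cats0. Qed.

Lemma size_wcat K : size (wcat r K) = (K * K.+1)%N.
Proof.
elim: K => [|K IH]; first by [].
rewrite wcatS size_cat IH size_nseq; lia.
Qed.

Lemma Zcard_wblock k : Zcard (wblock r k) = (delta r k * (2 * k))%N.
Proof.
rewrite /Zcard /wblock count_nseq /=.
by case: (delta r k).
Qed.

Lemma Zcard_wcat K : Zcard (wcat r K) = psum r K.
Proof.
elim: K => [|K IH]; first by [].
rewrite wcatS /Zcard count_cat -/(Zcard _) -/(Zcard _) IH Zcard_wblock /= /delta /=.
by case: (delta_test _ _ _); rewrite ?mul1n ?mul0n.
Qed.

Lemma wcat_prefix K L : (K <= L)%N -> exists s, wcat r L = wcat r K ++ s.
Proof.
elim: L => [|L IH]; first by rewrite leqn0 => /eqP ->; exists [::]; rewrite cats0.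
rewrite leq_eqVlt => /orP [/eqP ->|]; first by exists [::]; rewrite cats0.
rewrite ltnS => /IH [s E]; exists (s ++ wblock r L.+1).
by rewrite wcatS E catA.
Qed.

Lemma take_wcat n K L : (n <= K * K.+1)%N -> (n <= L * L.+1)%N ->
  take n (wcat r L) = take n (wcat r K).
Proof.
wlog KL : K L / (K <= L)%N.
  move=> W h1 h2; case: (leqP K L) => KL; first exact: W.
  by rewrite (W L K) // ltnW.
move=> h1 _; have [s ->] := @wcat_prefix K L KL.
rewrite take_cat size_wcat ltn_neqAle h1 andbT; case: eqP => // ->.
by rewrite subnn take0 cats0 -size_wcat take_size.
Qed.

Lemma Zpref n k : (k * k.+1 <= n)%N -> (n <= k.+1 * k.+2)%N ->
  Zcard (wprefix r n) = (psum r k + delta r k.+1 * (n - k * k.+1))%N.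
Proof.
move=> h1 h2; rewrite /wprefix (@take_wcat n k.+1 n) //; last by nia.
rewrite wcatS take_cat size_wcat ltnNge h1 /= /Zcard count_cat -/(Zcard _) Zcard_wcat.
rewrite /wblock take_nseq; last by lia.
rewrite count_nseq; congr (_ + _)%N.
by case: (delta r k.+1).
Qed.
End S.

Lemma realb (R : realType) (r p m K Z : R) : 0 <= r -> r < 1 -> 1 <= K ->
  0 <= m -> m <= 2*(K+1) -> r*(K*(K+1)) - 2*K <= p -> p <= r*(K*(K+1)) ->
  (Z = p \/ Z = p + m) -> `|r - Z/(K*(K+1)+m)| <= 4/K.
Proof.
move=> r0 r1 K1 m0 m2 pl pu hZ.
have rK : r * K <= K by apply: ler_piMl => //; [lra|apply: ltW].
have rm : r * m <= m by apply: ler_piMl => //; apply: ltW.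
have rm0 : 0 <= r * m by rewrite mulr_ge0.
have N0 : 0 < K*(K+1)+m by apply: ltr_wpDr => //; apply: mulr_gt0; lra.
have -> : r - Z/(K*(K+1)+m) = (r*(K*(K+1)+m) - Z)/(K*(K+1)+m).
  by field; rewrite gt_eqF.
rewrite normrM normfV (gtr0_norm N0) ler_pdivrMr //.
have -> : 4/K * (K*(K+1)+m) = 4*(K+1) + 4/K * m by field; lra.
have : 0 <= 4/K * m by rewrite mulr_ge0 // divr_ge0 //; lra.
have : `|r * (K * (K + 1) + m) - Z| <= 4*(K+1).
  rewrite ler_norml; case: hZ => ->; apply/andP; split; lra.
lra.
Qed.

Lemma exists_k k0 n : (k0 * k0.+1 <= n)%N ->
  exists k, [/\ (k0 <= k)%N, (k * k.+1 <= n)%N & (n <= k.+1 * k.+2)%N].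
Proof.
elim: n => [|n IH].
  rewrite leqn0 muln_eq0 orbF => /eqP ->; exists 0%N; split => //.
rewrite leq_eqVlt => /orP [/eqP E|].
  by exists k0; split => //; rewrite -E // ; nia.
rewrite ltnS => /IH [k [h0 h1 h2]].
case: (leqP n.+1 (k.+1 * k.+2)) => h3.
  by exists k; split => //; lia.
exists k.+1; split => //; nia.
Qed.

Theorem lemma4p16 (R : realType) (r : R) (hr0 : 0 <= r) (hr1 : r < 1) :
  (fun n : nat => (Zcard (wprefix r n))%:R / n%:R : R) @ \oo --> r.
Proof.
apply/cvgrPdist_le => eps eps0.
set k0 := (Num.trunc (4/eps)).+1.
have hk0 : 4/eps < k0%:R := truncnS_gt _.
exists (k0 * k0.+1)%N => // n /= hn.
have [k [kk0 hk1 hk2]] := @exists_k k0 n hn.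
rewrite (@Zpref R r hr0 hr1 n k hk1 hk2).
have [pu pl] := @psum_bounds R r hr0 hr1 k.
have k1 : (1 <= k)%N by apply: leq_trans kk0.
have K1 : 1 <= k%:R :> R by rewrite ler1n.
have Kk0 : k0%:R <= k%:R :> R by rewrite ler_nat.
have [e1 _] := natS2 R k.
set m := (n - k * k.+1)%N.
have hn' : n = (k * k.+1 + m)%N by rewrite subnKC.
have m2 : (m <= 2 * k.+1)%N by rewrite /m; lia.
rewrite [in X in _ / X]hn' natrD natrD natrM natrM e1 in pu pl *.
have hb : 4 / k%:R <= eps.
  have K0 : 0 < k%:R :> R by apply: lt_le_trans K1.
  rewrite ler_pdivrMr // mulrC; apply: ltW.
  by rewrite -ltr_pdivrMr //; apply: lt_le_trans Kk0.
apply: le_trans hb.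
apply: (@realb R r (psum r k)%:R m%:R k%:R _ hr0 hr1 K1) => //.
- by rewrite -e1 -natrM ler_nat.
- by case: (delta r k.+1); [right; rewrite mul1n | left; rewrite mul0n addr0].
Qed.
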